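(* Let $R$ be a commutative domain with field of fractions $F$, and let $A\in R^{n\times n}$ have rank $r\ge1$ with $\alpha^i\ne0$ for $i=1,\dots,r$. Let $L$ be the $n\times n$ matrix whose first $r$ columns are $(\alpha^j_{i,j})_{i=1..n,\,j=1..r}$ and whose last $n-r$ columns are the standard basis vectors $e_{r+1},\dots,e_n$; let $U$ be the $n\times n$ matrix whose first $r$ rows are $(\alpha^i_{i,j})_{i=1..r,\,j=1..n}$ and whose last $n-r$ rows are $e_{r+1}^T,\dots,e_n^T$; and let $D=\mathrm{diag}\big((\alpha^0\alpha^1)^{-1},\dots,(\alpha^{r-1}\alpha^r)^{-1},0,\dots,0\big)\in F^{n\times n}$. Let $S$ be the $n\times n$ ''flipped identity'' matrix (ones on the antidiagonal, zeros elsewhere). Then $A=LDU$, $L$ is an invertible lower triangular matrix, $U$ is an invertible upper triangular matrix, $V=SLS$ is an invertible upper triangular matrix, and $$SA=V\,(SD)\,U,$$ where $SD$ has at most one nonzero entry in each row and each column; i.e. this is a Bruhat decomposition of $SA$.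
   Context: For $A=(a_{i,j})\in R^{n\times n}$ and integers $k\ge1$, $1\le i,j\le n$, $\alpha^k_{i,j}$ denotes the $k\times k$ minor of $A$ formed by rows $1,\dots,k-1,i$ and columns $1,\dots,k-1,j$ (it is $0$ if $i<k$ or $j<k$). Set $\alpha^0=1$ and $\alpha^k=\alpha^k_{k,k}$. A Bruhat decomposition of a matrix $M$ is a factorization $M=VwU$ with $V,U$ nonsingular upper triangular and $w$ a (possibly weighted) permutation-type matrix, i.e. having at most one nonzero entry in each row and column. *)

(* Defs.v *)
From HB Require Import structures.
From mathcomp Require Import all_boot all_order all_algebra all_fingroup.
Set Implicit Arguments. Unset Strict Implicit. Unset Printing Implicit Defensive.
Import Order.TTheory GRing.Theory Num.Theory.
Local Open Scope ring_scope.

(* Indices are 0-based ordinals: the paper's row/column i (1-based) is the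
   ordinal of value i-1. *)

(* Row (resp. column) selection for the minor alpha^k_{i,j}: positions
   0..k-2 are rows/cols 1..k-1 of the paper, position k-1 is i (resp. j). *)
Definition minor_idx (n k : nat) (i : 'I_n) (a : 'I_k) : 'I_n :=
  if (a < k.-1)%N then insubd i (val a) else i.

(* alpha^k_{i,j}: the k x k minor of A with rows 1..k-1,i and columns
   1..k-1,j (paper's 1-based indexing); it is 0 if i < k or j < k
   (1-based), i.e. if val i + 1 < k or val j + 1 < k.
   For k = 0 it is the empty determinant 1. *)
Definition alpha (R : comNzRingType) (n : nat) (A : 'M[R]_n) (k : nat)
    (i j : 'I_n) : R :=
  if ((k <= (val i).+1) && (k <= (val j).+1))%N then
    \det (\matrix_(a < k, b < k) A (minor_idx i a) (minor_idx j b))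
  else 0.

(* alpha^k = alpha^k_{k,k}, and alpha^0 = 1. *)
Definition alpha_diag (R : comNzRingType) (n : nat) (A : 'M[R]_n) (k : nat) : R :=
  if k is k'.+1 then
    (if @insub nat (fun m => (m < n)%N) 'I_n k' is Some i then alpha A k i i
     else 0)
  else 1.

Definition Lmat (R : comNzRingType) (n : nat) (A : 'M[R]_n) (r : nat) : 'M[R]_n :=
  \matrix_(i, j) (if (val j < r)%N then alpha A (val j).+1 i j
                  else (i == j)%:R).

Definition Umat (R : comNzRingType) (n : nat) (A : 'M[R]_n) (r : nat) : 'M[R]_n :=
  \matrix_(i, j) (if (val i < r)%N then alpha A (val i).+1 i j
                  else (i == j)%:R).

Definition Dmat (R : idomainType) (n : nat) (A : 'M[R]_n) (r : nat)
    : 'M[{fraction R}]_n :=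
  \matrix_(i, j) (if (i == j) && (val i < r)%N then
                    (@tofrac R (alpha_diag A (val i) * alpha_diag A (val i).+1))^-1
                  else 0).

Definition flip_mx (R : pzRingType) (n : nat) : 'M[R]_n :=
  \matrix_(i, j) (j == rev_ord i)%:R.

Definition toF (R : idomainType) (n : nat) (M : 'M[R]_n) : 'M[{fraction R}]_n :=
  map_mx (@tofrac R) M.

(* Lower / upper triangular (square) matrices.  MathComp's is_trig_mx means
   A i j = 0 for i < j, i.e. lower triangular. *)
Definition lower_trig (R : pzRingType) (n : nat) (M : 'M[R]_n) : Prop :=
  is_trig_mx M.
Definition upper_trig (R : pzRingType) (n : nat) (M : 'M[R]_n) : Prop :=
  is_trig_mx M^T.

Definition perm_type_mx (R : pzRingType) (n : nat) (w : 'M[R]_n) : Prop :=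
  (forall i j j', w i j != 0 -> w i j' != 0 -> j = j') /\
  (forall j i i', w i j != 0 -> w i' j != 0 -> i = i').

Definition bruhat_decomposition (F : fieldType) (n : nat)
    (M V w U : 'M[F]_n) : Prop :=
  [/\ M = V *m w *m U,
      upper_trig V /\ V \in unitmx,
      upper_trig U /\ U \in unitmx
    & perm_type_mx w].

(* Main.v *)
Require Import Defs.
From HB Require Import structures.
From mathcomp Require Import all_boot all_order all_algebra all_fingroup.
From mathcomp Require Import zify.
Import GRing.Theory.
Local Open Scope ring_scope.
Set Implicit Arguments. Unset Strict Implicit. Unset Printing Implicit Defensive.

Definition Mx (R : comNzRingType) (n : nat) (A : 'M[R]_n) (k : nat) (i j : 'I_n) : 'M[R]_k :=
  \matrix_(a < k, b < k) A (minor_idx i a) (minor_idx j b).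

Lemma val_minor n k (i : 'I_n) (a : 'I_k) :
  val (minor_idx i a) = if (a < k.-1)%N then (if (a < n)%N then val a else val i) else val i.
Proof. by rewrite /minor_idx; case: ifP => // _; rewrite val_insubd. Qed.

Lemma alpha_tr (R : comNzRingType) n (A : 'M[R]_n) k i j :
  alpha A k i j = alpha A^T k j i.
Proof.
rewrite /alpha andbC; case: ifP => // _.
rewrite -det_tr; congr (\det _); apply/matrixP => a b; by rewrite !mxE.
Qed.

Lemma alpha_diag_tr (R : comNzRingType) n (A : 'M[R]_n) k :
  alpha_diag A^T k = alpha_diag A k.
Proof. case: k => // k; rewrite /alpha_diag; destruct (insub k) as [i|] => //; by rewrite alpha_tr trmxK. Qed.

Lemma alpha_det (R : comNzRingType) n (A : 'M[R]_n) (j i : 'I_n) :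
  alpha A j.+1 i j = \det (Mx A j.+1 i j).
Proof.
rewrite /alpha leqnn andbT; case: leqP => // hij.
have hi : (i < j.+1)%N by rewrite ltnS ltnW.
apply: esym; apply: (@determinant_alternate _ _ _ (Ordinal hi) ord_max).
  by rewrite -val_eqE /= neq_ltn hij.
move=> b; rewrite !mxE; congr (A _ _); apply: val_inj; rewrite !val_minor /=.
by rewrite hij ltnn; case: ifP.
Qed.

Definition Ccol (R : comNzRingType) (n : nat) (A : 'M[R]_n) (j m : 'I_n) : R :=
  if (m <= j)%N then cofactor (Mx A j.+1 j j) ord_max (inord m) else 0.

Lemma det_expand (R : comNzRingType) n (A : 'M[R]_n) (j i : 'I_n) :
  \det (Mx A j.+1 i j) = \sum_m A i m * Ccol A j m.
Proof.
rewrite (expand_det_row _ ord_max).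
have -> : \sum_m A i m * Ccol A j m = \sum_(m < n | (m < j.+1)%N) A i m * Ccol A j m.
  rewrite [RHS]big_mkcond /=; apply: eq_bigr => m _; rewrite /Ccol ltnS.
  by case: ifP => // _; rewrite mulr0.
rewrite (big_ord_narrow (ltn_ord j)) /=; apply: eq_bigr => b _.
rewrite /Ccol /= -ltnS ltn_ord inord_val.
have -> : Mx A j.+1 i j ord_max b = A i (widen_ord (ltn_ord j) b).
  rewrite !mxE; congr (A _ _); apply: val_inj; rewrite !val_minor /=; first by rewrite ltnn.
  case: ifP => hb; first by rewrite (ltn_trans hb (ltn_ord j)).
  by apply/eqP; rewrite eqn_leq leqNgt hb /= -ltnS ltn_ord.
congr (_ * _); rewrite /cofactor; congr (_ * \det _).
apply/matrixP => a c; rewrite !mxE; congr (A _ _); apply: val_inj; rewrite !val_minor /=.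
have haj : (a < j)%N := ltn_ord a.
have ha : (bump j a = a)%N by rewrite /bump leqNgt haj.
by rewrite ha haj (ltn_trans haj (ltn_ord j)).
Qed.

Lemma alphaL (R : comNzRingType) n (A : 'M[R]_n) (j i : 'I_n) :
  alpha A j.+1 i j = \sum_m A i m * Ccol A j m.
Proof. by rewrite alpha_det det_expand. Qed.

Lemma alphaU (R : comNzRingType) n (A : 'M[R]_n) (j i : 'I_n) :
  alpha A i.+1 i j = \sum_m Ccol A^T i m * A m j.
Proof.
rewrite alpha_tr alphaL; apply: eq_bigr => m _; by rewrite mxE mulrC.
Qed.

Lemma Ccol_diag (R : comNzRingType) n (A : 'M[R]_n) (j : 'I_n) :
  Ccol A j j = alpha_diag A j.
Proof.
rewrite /Ccol leqnn /cofactor.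
have -> : inord j = ord_max :> 'I_j.+1 by apply: val_inj; rewrite /= inordK.
rewrite /= -signr_odd addnn odd_double expr0 mul1r.
case: j => [[|j'] hj] /=; first by rewrite det_mx00.
have -> : insub j' = Some (Ordinal (ltnW hj)) := valK (Ordinal (ltnW hj)).
rewrite /alpha /= leqnn /=.
congr (\det _); apply/matrixP => a c; rewrite !mxE; congr (A _ _); apply: val_inj;
  rewrite !val_minor /=.
- have haj : (a < j'.+1)%N := ltn_ord a.
  have ha : (bump j'.+1 a = a)%N by rewrite /bump leqNgt haj.
  rewrite ha haj (ltn_trans haj hj).
  by case: ifP => // h; apply/eqP; rewrite eqn_leq -ltnS haj leqNgt h.
- have haj : (c < j'.+1)%N := ltn_ord c.
  have ha : (bump j'.+1 c = c)%N by rewrite /bump leqNgt haj.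
  rewrite ha haj (ltn_trans haj hj).
  by case: ifP => // h; apply/eqP; rewrite eqn_leq -ltnS haj leqNgt h.
Qed.


Definition Cm (R : comNzRingType) n (A : 'M[R]_n) r : 'M[R]_n :=
  \matrix_(m, k) (if (k < r)%N then Ccol A k m else 0).
Definition Rm (R : comNzRingType) n (A : 'M[R]_n) r : 'M[R]_n :=
  \matrix_(k, m) (if (k < r)%N then Ccol A^T k m else 0).
Definition Pim (R : comNzRingType) n r : 'M[R]_n :=
  \matrix_(i, j) ((i == j) && (r <= i)%N)%:R.
Definition Dp (R : comNzRingType) n (A : 'M[R]_n) r : 'M[R]_n :=
  \matrix_(i, j) (if (i == j) && (i < r)%N then alpha_diag A i * alpha_diag A i.+1 else 0).

Lemma L_eq (R : comNzRingType) n (A : 'M[R]_n) r : Lmat A r = A *m Cm A r + Pim R n r.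
Proof.
apply/matrixP => i j; rewrite !mxE; case: ifP => hj.
  have -> : ((i == j) && (r <= i)%N) = false by case: eqP => // ->; rewrite leqNgt hj.
  rewrite alphaL addr0; apply: eq_bigr => m _; by rewrite mxE hj.
rewrite big1 ?add0r; last by move=> m _; rewrite mxE hj mulr0.
by case: eqP => // ->; rewrite leqNgt hj.
Qed.

Lemma U_eq (R : comNzRingType) n (A : 'M[R]_n) r : Umat A r = Rm A r *m A + Pim R n r.
Proof.
apply/matrixP => i j; rewrite !mxE; case: ifP => hi.
  have -> : ((i == j) && (r <= i)%N) = false by rewrite leqNgt hi andbF.
  rewrite alphaU addr0; apply: eq_bigr => m _; by rewrite mxE hi.
rewrite big1 ?add0r; last by move=> m _; rewrite mxE hi mul0r.
by rewrite leqNgt hi andbT.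
Qed.

Lemma Lmat_trig (R : comNzRingType) n (A : 'M[R]_n) r (i j : 'I_n) :
  (i < j)%N -> Lmat A r i j = 0.
Proof.
move=> hij; rewrite mxE; case: ifP => _.
  by rewrite /alpha leqNgt ltnS hij.
by rewrite -val_eqE (ltn_eqF hij).
Qed.

Lemma Umat_trig (R : comNzRingType) n (A : 'M[R]_n) r (i j : 'I_n) :
  (j < i)%N -> Umat A r i j = 0.
Proof.
move=> hij; rewrite mxE; case: ifP => _.
  by rewrite /alpha andbC leqNgt ltnS hij.
by rewrite -val_eqE (gtn_eqF hij).
Qed.

Lemma Ccol0 (R : comNzRingType) n (A : 'M[R]_n) (j m : 'I_n) : (j < m)%N -> Ccol A j m = 0.
Proof. by move=> h; rewrite /Ccol leqNgt h. Qed.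

Lemma alpha_diagS (R : comNzRingType) n (A : 'M[R]_n) (k : 'I_n) :
  alpha_diag A k.+1 = alpha A k.+1 k k.
Proof. by rewrite /= valK. Qed.

Lemma RAC (R : comNzRingType) n (A : 'M[R]_n) r : Rm A r *m A *m Cm A r = Dp A r.
Proof.
have e1 : Rm A r *m A *m Cm A r = Umat A r *m Cm A r.
  suff h0 : Pim R n r *m Cm A r = 0 by rewrite U_eq mulmxDl h0 addr0.
  apply/matrixP => k l; rewrite !mxE big1 // => m _; rewrite !mxE.
  case: (eqVneq k m) => [<-|]; last by rewrite mul0r.
  case: (leqP r k) => hk /=; last by rewrite mul0r.
  case: ifP => hl; last by rewrite mulr0.
  by rewrite Ccol0 ?mulr0 // (leq_trans hl hk).
have e2 : Rm A r *m A *m Cm A r = Rm A r *m Lmat A r.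
  suff h0 : Rm A r *m Pim R n r = 0 by rewrite L_eq mulmxDr h0 addr0 mulmxA.
  apply/matrixP => k l; rewrite !mxE big1 // => m _; rewrite !mxE.
  case: (eqVneq m l) => [->|]; last by rewrite mulr0.
  case: (leqP r l) => hm /=; last by rewrite mulr0.
  case: ifP => hk; last by rewrite mul0r.
  by rewrite Ccol0 ?mul0r // (leq_trans hk hm).
apply/matrixP => k l; rewrite [in RHS]mxE.
case: (ltngtP k l) => hkl.
- rewrite -val_eqE (ltn_eqF hkl) /= e2 mxE; apply: big1 => m _.
  case: (ltnP k m) => hm; first by rewrite mxE; case: ifP; rewrite ?Ccol0 ?mul0r.
  by rewrite Lmat_trig ?mulr0 // (leq_ltn_trans hm hkl).
- rewrite -val_eqE (gtn_eqF hkl) /= e1 mxE; apply: big1 => m _.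
  case: (ltnP l m) => hm; first by rewrite [Cm _ _ _ _]mxE; case: ifP; rewrite ?Ccol0 ?mulr0.
  by rewrite Umat_trig ?mul0r // (leq_ltn_trans hm hkl).
have -> : l = k by apply: val_inj.
rewrite e2 mxE (bigD1 k) //= big1 ?addr0; last first.
  move=> m hm; case: (ltnP k m) => h; first by rewrite mxE; case: ifP; rewrite ?Ccol0 ?mul0r.
  rewrite Lmat_trig ?mulr0 // ltn_neqAle h andbT.
  by apply: contra hm => /eqP e; apply/eqP; apply: val_inj.
rewrite eqxx /= !mxE; case: ifP => hk; last by rewrite mul0r.
by rewrite Ccol_diag alpha_diag_tr valK.
Qed.


Lemma diag_mul (F : pzRingType) n (M N : 'M[F]_n) i j :
  (forall k, k != i -> M i k = 0) -> (M *m N) i j = M i i * N i j.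
Proof.
move=> h; rewrite mxE (bigD1 i) //= big1 ?addr0 // => k hk.
by rewrite h ?mul0r.
Qed.

Lemma toFM (R : idomainType) n (M N : 'M[R]_n) : toF (M *m N) = toF M *m toF N.
Proof. exact: map_mxM. Qed.
Lemma toFD (R : idomainType) n (M N : 'M[R]_n) : toF (M + N) = toF M + toF N.
Proof. exact: map_mxD. Qed.


Lemma LDU (R : idomainType) n (A : 'M[R]_n) r :
  \rank (toF A) = r ->
  (forall i : nat, (1 <= i <= r)%N -> alpha_diag A i != 0) ->
  toF A = toF (Lmat A r) *m Dmat A r *m toF (Umat A r).
Proof.
move=> hrk hal.
have hrn : (r <= n)%N by rewrite -hrk rank_leq_row.
have hal' : forall k : 'I_n, (k < r)%N -> alpha_diag A k * alpha_diag A k.+1 != 0.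
  move=> k hk; rewrite mulf_neq0 //; last by apply: hal; rewrite /= hk.
  case: (nat_of_ord k) hk => [_|k' hk]; first exact: oner_neq0.
  by apply: hal; rewrite /= ltnW.
set D := Dmat A r.
set PF := toF (Pim R n r).
set DP := toF (Dp A r).
set AF := toF A.
set CF := toF (Cm A r).
set RF := toF (Rm A r).
have Ddiag : forall i k, k != i -> D i k = 0.
  by move=> i k hk; rewrite mxE eq_sym (negbTE hk).
have DPdiag : forall i k, k != i -> DP i k = 0.
  by move=> i k hk; rewrite !mxE eq_sym (negbTE hk) /= rmorph0.
have PFdiag : forall i k, k != i -> PF i k = 0.
  by move=> i k hk; rewrite !mxE eq_sym (negbTE hk) /= rmorph0.
have DPF : D *m PF = 0.
  apply/matrixP => i j; rewrite diag_mul; last exact: Ddiag.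
  rewrite /D /PF /DP !mxE eqxx andTb.
  case: ifP => hi; last by rewrite mul0r.
  by rewrite leqNgt hi andbF (_ : (false%:R : R) = 0) // rmorph0 mulr0.
have PFD : PF *m D = 0.
  apply/matrixP => i j; rewrite diag_mul; last exact: PFdiag.
  rewrite /D /PF /DP !mxE eqxx andTb.
  case: ifP => hi; last by rewrite mulr0.
  move/andP: hi => [_ hi].
  by rewrite leqNgt hi (_ : ((~~ true)%:R : R) = 0) // rmorph0 mul0r.
have DDP : D *m DP = pid_mx r.
  apply/matrixP => i j; rewrite diag_mul; last exact: Ddiag.
  rewrite /D /PF /DP !mxE eqxx andTb.
  case: (eqVneq i j) => [<-|hij]; last first.
    by rewrite rmorph0 mulr0 val_eqE (negbTE hij).
  rewrite eqxx andTb; case: ifP => hi; last by rewrite mul0r.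
  by rewrite mulVf // tofrac_eq0 hal'.
have DPD : DP *m D = pid_mx r.
  apply/matrixP => i j; rewrite diag_mul; last exact: DPdiag.
  rewrite /D /PF /DP !mxE eqxx andTb.
  case: (eqVneq i j) => [<-|hij]; last first.
    by rewrite mulr0 val_eqE (negbTE hij).
  rewrite eqxx andTb; case: ifP => hi; last by rewrite rmorph0 mul0r.
  by rewrite mulfV // tofrac_eq0 hal'.
have pidD : pid_mx r *m D = D.
  apply/matrixP => i j; rewrite diag_mul; last first.
    by move=> k hk; rewrite mxE eq_sym val_eqE (negbTE hk).
  rewrite /D !mxE eqxx /=; case: (ltnP i r) => hi; first by rewrite mul1r.
  by rewrite mul0r andbF.
have eL : toF (Lmat A r) = AF *m CF + PF by rewrite L_eq toFD toFM.
have eU : toF (Umat A r) = RF *m AF + PF by rewrite U_eq toFD toFM.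
have eD : RF *m AF *m CF = DP by rewrite -!toFM RAC.
set G := CF *m D *m RF.
have eLDU : toF (Lmat A r) *m D *m toF (Umat A r) = AF *m G *m AF.
  rewrite eL eU mulmxDl PFD addr0 mulmxDr -!mulmxA DPF !mulmx0 addr0.
  by rewrite /G !mulmxA.
have GAG : G *m AF *m G = G.
  rewrite /G.
  have -> : CF *m D *m RF *m AF *m (CF *m D *m RF) = CF *m (D *m (RF *m AF *m CF) *m D) *m RF.
    by rewrite !mulmxA.
  by rewrite eD DDP pidD.
have rk1 : (r <= \rank (G *m AF))%N.
  have e : RF *m (AF *m (G *m AF)) *m CF *m D = pid_mx r.
    have -> : RF *m (AF *m (G *m AF)) *m CF *m D
      = (RF *m AF *m CF) *m D *m (RF *m AF *m CF) *m D.
      by rewrite /G !mulmxA.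
    by rewrite eD DPD -mulmxA DPD pid_mx_id.
  rewrite -{1}(@rank_pid_mx {fraction R} n n r hrn hrn) -e.
  apply: (leq_trans (mxrankM_maxl _ _)); apply: (leq_trans (mxrankM_maxl _ _)).
  apply: (leq_trans (mxrankM_maxr _ _)); exact: (mxrankM_maxr _ _).
have sub1 : (G *m AF <= AF)%MS by apply: submxMl.
have sub2 : (AF <= G *m AF)%MS.
  by rewrite -(mxrank_leqif_sup sub1).2 eqn_leq (mxrankS sub1) hrk rk1.
have [X eX] := submxP sub2.
rewrite eLDU; apply: esym.
rewrite {1}eX.
have -> : X *m (G *m AF) *m G *m AF = X *m (G *m AF *m G) *m AF by rewrite !mulmxA.
by rewrite GAG -mulmxA -eX.
Qed.


Lemma trig_unit (F : fieldType) n (M : 'M[F]_n) :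
  is_trig_mx M -> (forall i, M i i != 0) -> M \in unitmx.
Proof.
move=> ht hd; rewrite unitmxE det_trig // unitfE; apply/prodf_neq0 => i _; exact: hd.
Qed.

Lemma flipL (F : pzRingType) n (M : 'M[F]_n) i j : (flip_mx F n *m M) i j = M (rev_ord i) j.
Proof.
rewrite mxE (bigD1 (rev_ord i)) //= big1 ?addr0; first by rewrite mxE eqxx mul1r.
by move=> k hk; rewrite mxE (negbTE hk) mul0r.
Qed.

Lemma flipR (F : pzRingType) n (M : 'M[F]_n) i j : (M *m flip_mx F n) i j = M i (rev_ord j).
Proof.
rewrite mxE (bigD1 (rev_ord j)) //= big1 ?addr0; first by rewrite mxE rev_ordK eqxx mulr1.
move=> k hk; rewrite mxE (_ : (j == rev_ord k) = false) ?mulr0 //.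
by apply: contraNF hk => /eqP ->; rewrite rev_ordK.
Qed.

Lemma flip2 (F : pzRingType) n : flip_mx F n *m flip_mx F n = 1%:M.
Proof. by apply/matrixP => i j; rewrite flipL !mxE rev_ordK eq_sym. Qed.

Lemma rev_lt n (i j : 'I_n) : (i < j)%N -> (rev_ord j < rev_ord i)%N.
Proof. move=> h; rewrite /=; have := ltn_ord j; lia. Qed.

Unset Implicit Arguments.

Theorem corollary2 (R : idomainType) (n r : nat) (A : 'M[R]_n) :
  \rank (toF A) = r ->
  (1 <= r)%N ->
  (forall i : nat, (1 <= i <= r)%N -> alpha_diag A i != 0) ->
  let L := Lmat A r in
  let U := Umat A r in
  let D := Dmat A r in
  let S := flip_mx {fraction R} n in
  let V := S *m toF L *m S in
  [/\ toF A = toF L *m D *m toF U,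
      lower_trig L /\ toF L \in unitmx,
      upper_trig U /\ toF U \in unitmx,
      upper_trig V /\ V \in unitmx
    & [/\ S *m toF A = V *m (S *m D) *m toF U,
           perm_type_mx (S *m D)
         & bruhat_decomposition (S *m toF A) V (S *m D) (toF U)]].
Proof.
move=> hrk hr1 hal L U D S V.
have hLDU := LDU hrk hal.
have hrn : (r <= n)%N by rewrite -hrk rank_leq_row.
have Ltr : is_trig_mx L by apply/is_trig_mxP => i j h; rewrite /L Lmat_trig.
have LFtr : is_trig_mx (toF L).
  by apply/is_trig_mxP => i j h; rewrite mxE /L Lmat_trig // rmorph0.
have LFu : toF L \in unitmx.
  apply: trig_unit => // i; rewrite mxE tofrac_eq0 /L mxE eqxx.
  case: ifP => hi; last exact: oner_neq0.
  by rewrite -alpha_diagS; apply: hal; rewrite /= hi.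
have Utr : upper_trig U by apply/is_trig_mxP => i j h; rewrite mxE /U Umat_trig.
have UFtr : is_trig_mx (toF U)^T.
  by apply/is_trig_mxP => i j h; rewrite 2!mxE /U Umat_trig // rmorph0.
have UFu : toF U \in unitmx.
  rewrite -unitmx_tr; apply: trig_unit => // i; rewrite 2!mxE tofrac_eq0 /U mxE eqxx.
  case: ifP => hi; last exact: oner_neq0.
  by rewrite -alpha_diagS; apply: hal; rewrite /= hi.
have Su : S \in unitmx by have [] := mulmx1_unit (flip2 {fraction R} n).
have VE : forall i j, V i j = toF L (rev_ord i) (rev_ord j).
  by move=> i j; rewrite /V flipR flipL.
have Vtr : upper_trig V.
  apply/is_trig_mxP => i j h; rewrite mxE VE mxE /L Lmat_trig ?rmorph0 //.
  exact: rev_lt.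
have Vu : V \in unitmx by rewrite /V !unitmx_mul Su LFu.
have eS : S *m toF A = V *m (S *m D) *m toF U.
  rewrite hLDU /V !mulmxA -(mulmxA (S *m toF L) S S) flip2 mulmx1.
  by rewrite /L /U /D.
have SDE : forall i j, (S *m D) i j != 0 -> j = rev_ord i.
  move=> i j; rewrite flipL /D mxE; case: (eqVneq (rev_ord i) j) => [<- //|_]; by rewrite /= eqxx.
have pt : perm_type_mx (S *m D).
  split.
    by move=> i j j' /SDE -> /SDE ->.
  by move=> j i i' /SDE e1 /SDE e2; apply: rev_ord_inj; rewrite -e1 -e2.
split; [exact: hLDU | exact: (conj Ltr LFu) | exact: (conj Utr UFu) | exact: (conj Vtr Vu) |].
split; [exact: eS | exact: pt |].
split; [exact: eS | exact: (conj Vtr Vu) | exact: (conj UFtr UFu) | exact: pt].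
Qed.
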